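(* Let $F\in\mathbb{C}[x]$ have degree $n\ge 2$ and roots $z_1,\ldots,z_n$ (with multiplicity), let $0\le k\le n$, $K\ge 1$, and let $c_1,c_2$ satisfy \[ c_2\cdot n\cdot \ln\!\Big(\frac{1+2K}{2K}\Big)\ge c_1\cdot n\ge\frac{\max(1,k)}{\ln(1+\frac{1}{8K})}. \] Let $\Delta=\Delta(m,r)$ be $(1,\,4c_2\max(1,k)n^3)$-isolating for the roots $z_1,\ldots,z_k$. Then $F^{(k)}(z)\ne0$ for all $z\in c_2n^2\cdot\Delta$, and \[ \sum_{i=k+1}^n\left|\frac{F^{(i)}(m)(c_1nr)^{i-k}k!}{F^{(k)}(m)\,i!}\right|<\frac{1}{2K}. \]
   Context: $\Delta(m,r)$ is the open disk with center $m$ and radius $r>0$; $\lambda\cdot\Delta(m,r):=\Delta(m,\lambda r)$. For $0<\rho_1\le1\le\rho_2$, a disk $\Delta$ is $(\rho_1,\rho_2)$-isolating for a set $S$ of roots (with multiplicity) if $\rho_1\cdot\Delta$ contains exactly the roots in $S$ and $\rho_2\cdot\Delta\setminus\rho_1\cdot\Delta$ contains no root of $F$. *)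

(* Defs.v *)
From Stdlib Require Import Reals Lra List.
Import ListNotations.
Open Scope R_scope.

Definition Cx : Type := (R * R)%type.
Definition RtoC (a : R) : Cx := (a, 0).
Definition C0 : Cx := RtoC 0.
Definition Cadd (x y : Cx) : Cx := (fst x + fst y, snd x + snd y).
Definition Copp (x : Cx) : Cx := (- fst x, - snd x).
Definition Csub (x y : Cx) : Cx := Cadd x (Copp y).
Definition Cmul (x y : Cx) : Cx :=
  (fst x * fst y - snd x * snd y, fst x * snd y + snd x * fst y).
Definition Cinv (x : Cx) : Cx :=
  (fst x / (fst x ^ 2 + snd x ^ 2), - snd x / (fst x ^ 2 + snd x ^ 2)).
Definition Cdiv (x y : Cx) : Cx := Cmul x (Cinv y).
Definition Cmod (x : Cx) : R := sqrt (fst x ^ 2 + snd x ^ 2).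

(* Polynomials in C[x]: coefficient lists, lowest degree first. *)
Definition cpoly := list Cx.

Definition peval (p : cpoly) (x : Cx) : Cx :=
  fold_right (fun a acc => Cadd a (Cmul x acc)) C0 p.

Fixpoint pderiv_aux (j : nat) (p : cpoly) : cpoly :=
  match p with
  | [] => []
  | a :: t => Cmul (RtoC (INR j)) a :: pderiv_aux (S j) t
  end.
Definition pderiv (p : cpoly) : cpoly :=
  match p with [] => [] | _ :: t => pderiv_aux 1 t end.

Definition pderivn (i : nat) (p : cpoly) : cpoly := Nat.iter i pderiv p.

Definition has_degree (p : cpoly) (n : nat) : Prop :=
  length p = S n /\ nth n p C0 <> C0.

Definition roots_with_mult (p : cpoly) (zs : list Cx) : Prop :=
  forall x : Cx,
    peval p x = Cmul (nth (pred (length p)) p C0)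
                     (fold_right (fun z acc => Cmul (Csub x z) acc) (RtoC 1) zs).

(* (rho1, rho2)-isolating disk Delta(m, r) for the set S of roots
   (S given as a predicate on indices of the root list zs):
   rho1*Delta contains exactly the roots in S (with multiplicity) and
   rho2*Delta \ rho1*Delta contains no root of F. *)
Definition isolating (zs : list Cx) (S : nat -> Prop) (m : Cx) (r rho1 rho2 : R)
  : Prop :=
  (forall i, (i < length zs)%nat ->
      (S i <-> Cmod (Csub (nth i zs C0) m) < rho1 * r)) /\
  (forall i, (i < length zs)%nat ->
      ~ (rho1 * r <= Cmod (Csub (nth i zs C0) m) < rho2 * r)).

(* sum_{i=a}^{b} f i  (empty if b < a) *)
Definition sum_range (a b : nat) (f : nat -> R) : R :=
  fold_right Rplus 0 (map f (seq a (S b - a))).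

(* Main.v *)
Require Import Defs.
From Stdlib Require Import Arith Reals List Lra Lia.
From Coquelicot Require Complex.
Import ListNotations.
Open Scope R_scope.

Lemma Cx_ext (x y : Cx) : fst x = fst y -> snd x = snd y -> x = y.
Proof. destruct x, y; simpl; intros; subst; auto. Qed.
Ltac cx := repeat match goal with x : Cx |- _ => destruct x end;
  unfold Csub, Cadd, Cmul, Copp, RtoC, C0 in *; apply Cx_ext; simpl; ring.

Lemma Cmod_mul x y : Cmod (Cmul x y) = Cmod x * Cmod y.
Proof. exact (Complex.Cmod_mult x y). Qed.
Lemma Cmod_tri x y : Cmod (Cadd x y) <= Cmod x + Cmod y.
Proof. exact (Complex.Cmod_triangle x y). Qed.
Lemma Cmod_ge0 x : 0 <= Cmod x.
Proof. exact (Complex.Cmod_ge_0 x). Qed.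
Lemma Cmod_RtoC x : Cmod (RtoC x) = Rabs x.
Proof. exact (Complex.Cmod_R x). Qed.
Lemma Cmod_C0 : Cmod C0 = 0.
Proof. exact Complex.Cmod_0. Qed.
Lemma Cmod_opp x : Cmod (Copp x) = Cmod x.
Proof. exact (Complex.Cmod_opp x). Qed.
Lemma Cmod_eq0 x : Cmod x = 0 -> x = C0.
Proof. intro H. exact (Complex.Cmod_eq_0 x H). Qed.
Lemma Cmod_pos x : x <> C0 -> 0 < Cmod x.
Proof. intro H. destruct (Cmod_ge0 x) as [h|h]; auto. exfalso; apply H, Cmod_eq0; auto. Qed.
Lemma Cmod_inv x : x <> C0 -> Cmod (Cinv x) = / Cmod x.
Proof. intro H. exact (Complex.Cmod_inv x H). Qed.
Lemma Cmod_div x y : y <> C0 -> Cmod (Cdiv x y) = Cmod x / Cmod y.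
Proof. intro H. unfold Cdiv. rewrite Cmod_mul, Cmod_inv; auto. Qed.
Lemma Cmod_sub_sym x y : Cmod (Csub x y) = Cmod (Csub y x).
Proof. replace (Csub x y) with (Copp (Csub y x)) by cx. apply Cmod_opp. Qed.
Lemma Cmod_sub_tri x y : Cmod x - Cmod y <= Cmod (Csub x y).
Proof. assert (H := Cmod_tri (Csub x y) y).
  replace (Cadd (Csub x y) y) with x in H by cx. lra. Qed.
Lemma Cmul_eq0 x y : Cmul x y = C0 -> x <> C0 -> y = C0.
Proof. intros H Hx. apply Cmod_eq0. assert (E := f_equal Cmod H).
  rewrite Cmod_mul, Cmod_C0 in E. assert (P := Cmod_pos x Hx).
  assert (Q := Cmod_ge0 y). nra. Qed.

Fixpoint padd (p q : cpoly) : cpoly :=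
  match p, q with
  | [], _ => q
  | _, [] => p
  | a :: p', b :: q' => Cadd a b :: padd p' q'
  end.
Definition scal (c : Cx) (p : cpoly) : cpoly := map (Cmul c) p.
Fixpoint pmul (p q : cpoly) : cpoly :=
  match p with
  | [] => []
  | a :: p' => padd (scal a q) (C0 :: pmul p' q)
  end.
Definition coef (p : cpoly) (j : nat) : Cx := nth j p C0.

Lemma coef_nil j : coef [] j = C0.
Proof. destruct j; reflexivity. Qed.
Lemma coef_padd p q j : coef (padd p q) j = Cadd (coef p j) (coef q j).
Proof.
  revert q j; induction p as [|a p IH]; intros q j.
  - rewrite coef_nil. unfold coef. cx.
  - destruct q as [|b q].
    + simpl padd. rewrite coef_nil. unfold coef. cx.
    + destruct j; simpl; [reflexivity|]. exact (IH q j).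
Qed.
Lemma coef_scal c p j : coef (scal c p) j = Cmul c (coef p j).
Proof.
  revert j; induction p as [|a p IH]; intros j.
  - unfold scal; simpl map. rewrite !coef_nil. cx.
  - destruct j; simpl; [reflexivity|]. exact (IH j).
Qed.
Lemma coef_overflow p j : (length p <= j)%nat -> coef p j = C0.
Proof. intro H. unfold coef. apply nth_overflow; auto. Qed.

Lemma peval_nil x : peval [] x = C0.
Proof. reflexivity. Qed.
Lemma peval_cons a p x : peval (a :: p) x = Cadd a (Cmul x (peval p x)).
Proof. reflexivity. Qed.
Lemma peval_padd p q x : peval (padd p q) x = Cadd (peval p x) (peval q x).
Proof.
  revert q; induction p as [|a p IH]; intros q.
  - simpl. unfold C0; cx.
  - destruct q as [|b q]; simpl padd.
    + rewrite peval_nil. cx.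
    + rewrite !peval_cons, IH. cx.
Qed.
Lemma peval_scal c p x : peval (scal c p) x = Cmul c (peval p x).
Proof.
  induction p as [|a p IH].
  - simpl. unfold C0; cx.
  - unfold scal in *; simpl map. rewrite !peval_cons, IH. cx.
Qed.
Lemma peval_pmul p q x : peval (pmul p q) x = Cmul (peval p x) (peval q x).
Proof.
  induction p as [|a p IH].
  - simpl. unfold C0; cx.
  - simpl pmul. rewrite peval_padd, peval_scal, peval_cons, IH, peval_cons. cx.
Qed.

Lemma peval_ext p q x : (forall j, coef p j = coef q j) -> peval p x = peval q x.
Proof.
  revert q; induction p as [|a p IH]; intros q H.
  - induction q as [|b q IHq]; [reflexivity|].
    assert (Hb : b = C0) by (specialize (H O); rewrite coef_nil in H; auto).
    rewrite peval_cons, <- IHq, Hb. simpl; cx.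
    intro j. specialize (H (S j)). rewrite coef_nil in *. auto.
  - destruct q as [|b q].
    + assert (Ha : a = C0) by (specialize (H O); rewrite coef_nil in H; auto).
      rewrite peval_cons, Ha, (IH []). simpl; cx.
      intro j. specialize (H (S j)). rewrite coef_nil in *. auto.
    + rewrite !peval_cons. rewrite (IH q).
      * specialize (H O). unfold coef in H; simpl in H. rewrite H. reflexivity.
      * intro j. exact (H (S j)).
Qed.

Definition aeval (p : cpoly) (t : R) : R :=
  fold_right (fun a acc => Cmod a + t * acc) 0 p.

Lemma aeval_cons a p t : aeval (a :: p) t = Cmod a + t * aeval p t.
Proof. reflexivity. Qed.
Lemma aeval_ge0 p t : 0 <= t -> 0 <= aeval p t.
Proof. intro Ht. induction p; simpl; [lra|]. pose proof (Cmod_ge0 a). nra. Qed.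
Lemma peval_le_aeval p x : Cmod (peval p x) <= aeval p (Cmod x).
Proof.
  induction p as [|a p IH]; simpl.
  - rewrite Cmod_C0; lra.
  - eapply Rle_trans; [apply Cmod_tri|]. rewrite Cmod_mul.
    pose proof (Cmod_ge0 x). apply Rplus_le_compat_l. apply Rmult_le_compat_l; auto.
Qed.
Lemma aeval_mono p s t : 0 <= s <= t -> aeval p s <= aeval p t.
Proof.
  intro H. induction p as [|a p IH]; simpl; [lra|].
  pose proof (aeval_ge0 p s ltac:(lra)). nra.
Qed.
Lemma aeval_padd p q t : 0 <= t -> aeval (padd p q) t <= aeval p t + aeval q t.
Proof.
  intro Ht. revert q; induction p as [|a p IH]; intros q.
  - simpl; lra.
  - destruct q as [|b q]; simpl padd.
    + simpl; lra.
    + rewrite !aeval_cons. pose proof (Cmod_tri a b). pose proof (IH q). nra.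
Qed.
Lemma aeval_scal c p t : aeval (scal c p) t = Cmod c * aeval p t.
Proof.
  induction p as [|a p IH]; [simpl; ring|].
  unfold scal in *. simpl map. rewrite aeval_cons, aeval_cons, IH, Cmod_mul. ring.
Qed.
Lemma aeval_pmul p q t : 0 <= t -> aeval (pmul p q) t <= aeval p t * aeval q t.
Proof.
  intro Ht. induction p as [|a p IH]; simpl pmul.
  - simpl. lra.
  - eapply Rle_trans; [apply aeval_padd; auto|].
    rewrite aeval_scal, aeval_cons, aeval_cons, Cmod_C0.
    pose proof (aeval_ge0 q t Ht). nra.
Qed.

Lemma peval_zero_coef d : (forall x, x <> C0 -> peval d x = C0) -> forall j, coef d j = C0.
Proof.
  induction d as [|a d IH]; intros H j.
  - apply coef_nil.
  - assert (Ha : a = C0).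
    { destruct (Req_dec (Cmod a) 0) as [E|E]; [apply Cmod_eq0; auto|].
      exfalso. pose proof (Cmod_ge0 a) as Ga.
      set (M := aeval d 1). assert (HM : 0 <= M) by (apply aeval_ge0; lra).
      set (e := Rmin 1 (Cmod a / (2 * (M + 1)))).
      assert (He : 0 < e).
      { unfold e. apply Rmin_pos; [lra|]. apply Rdiv_lt_0_compat; lra. }
      assert (He1 : e <= 1) by apply Rmin_l.
      assert (He2 : e <= Cmod a / (2 * (M + 1))) by apply Rmin_r.
      assert (Hx : RtoC e <> C0).
      { intro Q. unfold RtoC, C0 in Q. injection Q. lra. }
      specialize (H _ Hx). rewrite peval_cons in H.
      assert (Ea : a = Copp (Cmul (RtoC e) (peval d (RtoC e)))).
      { replace a with (Cadd (Cadd a (Cmul (RtoC e) (peval d (RtoC e))))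
           (Copp (Cmul (RtoC e) (peval d (RtoC e))))) by cx.
        rewrite H. cx. }
      assert (B1 : Cmod a <= e * M).
      { rewrite Ea, Cmod_opp, Cmod_mul, Cmod_RtoC, Rabs_pos_eq by lra.
        apply Rmult_le_compat_l; [lra|].
        eapply Rle_trans; [apply peval_le_aeval|].
        rewrite Cmod_RtoC, Rabs_pos_eq by lra. apply aeval_mono. lra. }
      assert (B2 : e * M <= Cmod a / (2 * (M + 1)) * M) by nra.
      assert (B3 : Cmod a / (2 * (M + 1)) * M < Cmod a).
      { unfold Rdiv. apply Rmult_lt_reg_r with (2 * (M+1)); [lra|].
        field_simplify; try lra. nra. }
      lra. }
    destruct j as [|j]; [exact Ha|].
    unfold coef; simpl. apply IH. intros x Hx.
    specialize (H x Hx). rewrite peval_cons, Ha in H.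
    apply (Cmul_eq0 x); auto. rewrite <- H. cx.
Qed.

Definition psub p q := padd p (scal (Copp (RtoC 1)) q).
Lemma uniq_coef p q : (forall x, peval p x = peval q x) -> forall j, coef p j = coef q j.
Proof.
  intros H j. assert (Z := peval_zero_coef (psub p q)).
  assert (Z' : coef (psub p q) j = C0).
  { apply Z. intros x _. unfold psub. rewrite peval_padd, peval_scal, H. cx. }
  unfold psub in Z'. rewrite coef_padd, coef_scal in Z'.
  replace (coef p j) with (Cadd (Cadd (coef p j) (Cmul (Copp (RtoC 1)) (coef q j))) (coef q j)) by cx.
  rewrite Z'. cx.
Qed.

Lemma coef_cons0 a t : coef (a :: t) 0 = a.
Proof. reflexivity. Qed.
Lemma coef_consS a t j : coef (a :: t) (S j) = coef t j.
Proof. reflexivity. Qed.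

Lemma coef_pderiv_aux s t j : coef (pderiv_aux s t) j = Cmul (RtoC (INR (s + j))) (coef t j).
Proof.
  revert s j; induction t as [|a t IH]; intros s j.
  - simpl. rewrite !coef_nil. cx.
  - destruct j.
    + simpl. rewrite Nat.add_0_r. reflexivity.
    + simpl pderiv_aux. rewrite !coef_consS, IH. f_equal. f_equal. f_equal. lia.
Qed.
Lemma coef_pderiv p j : coef (pderiv p) j = Cmul (RtoC (INR (S j))) (coef p (S j)).
Proof.
  destruct p as [|a t].
  - simpl. rewrite !coef_nil. cx.
  - unfold pderiv. rewrite coef_pderiv_aux, coef_consS. reflexivity.
Qed.
Lemma length_pderiv_aux s t : length (pderiv_aux s t) = length t.
Proof. revert s; induction t; intros s; simpl; auto. Qed.
Lemma length_pderiv p : length (pderiv p) = pred (length p).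
Proof. destruct p; simpl; auto. apply length_pderiv_aux. Qed.
Lemma pderivn_S i p : pderivn (S i) p = pderiv (pderivn i p).
Proof. reflexivity. Qed.
Lemma length_pderivn i p : length (pderivn i p) = (length p - i)%nat.
Proof.
  induction i; [simpl; lia|]. rewrite pderivn_S, length_pderiv, IHi. lia.
Qed.
Lemma coef_pderivn_S i p j :
  coef (pderivn (S i) p) j = Cmul (RtoC (INR (S j))) (coef (pderivn i p) (S j)).
Proof. rewrite pderivn_S. apply coef_pderiv. Qed.

Lemma pderivn_cons0 i t j :
  coef (pderivn (S i) (C0 :: t)) j =
  Cadd (coef (C0 :: pderivn (S i) t) j)
       (Cmul (RtoC (INR (S i))) (coef (pderivn i t) j)).
Proof.
  revert j; induction i; intro j.
  - rewrite !pderivn_S. change (pderivn 0 ?x) with x. rewrite coef_pderiv.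
    destruct j.
    + rewrite coef_consS, coef_cons0. simpl INR. cx.
    + rewrite !coef_consS, coef_pderiv.
      replace (INR (S 0)) with 1 by (simpl; ring).
      rewrite (S_INR (S j)). cx.
  - rewrite coef_pderivn_S, IHi, coef_consS.
    idtac.
    destruct j.
    + rewrite coef_cons0, coef_pderivn_S.
      rewrite !S_INR. cx.
    + rewrite coef_consS. rewrite !coef_pderivn_S.
      rewrite !S_INR. cx.
Qed.

Definition ceq (p q : cpoly) := forall j, coef p j = coef q j.

Lemma peval_pderivn_cons a t i z :
  peval (pderivn (S i) (a :: t)) z =
  Cadd (Cmul z (peval (pderivn (S i) t) z)) (Cmul (RtoC (INR (S i))) (peval (pderivn i t) z)).
Proof.
  assert (E : pderivn (S i) (a :: t) = pderivn (S i) (C0 :: t)).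
  { unfold pderivn. rewrite !Nat.iter_succ_r. reflexivity. }
  rewrite E.
  rewrite (peval_ext _ (padd (C0 :: pderivn (S i) t) (scal (RtoC (INR (S i))) (pderivn i t)))).
  - rewrite peval_padd, peval_cons, peval_scal. cx.
  - intro j. rewrite pderivn_cons0, coef_padd, coef_scal. reflexivity.
Qed.

Definition Tc (i : nat) (p : cpoly) (z : Cx) : Cx :=
  Cmul (peval (pderivn i p) z) (RtoC (/ INR (fact i))).

Lemma pderivn_short i t : (length t <= i)%nat -> pderivn i t = [].
Proof. intro H. apply length_zero_iff_nil. rewrite length_pderivn. lia. Qed.
Lemma Tc_short i t z : (length t <= i)%nat -> Tc i t z = C0.
Proof. intro H. unfold Tc. rewrite pderivn_short; auto. simpl. cx. Qed.

Lemma Tc_cons a t z i : Tc (S i) (a :: t) z = Cadd (Cmul z (Tc (S i) t z)) (Tc i t z).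
Proof.
  unfold Tc. rewrite peval_pderivn_cons.
  assert (E : / INR (fact i) = INR (S i) * / INR (fact (S i))).
  { rewrite fact_simpl, mult_INR. field. split; [apply not_0_INR, fact_neq_0|apply not_0_INR; lia]. }
  rewrite E. cx.
Qed.

Definition taylor (p : cpoly) (z : Cx) (L : nat) : cpoly := map (fun i => Tc i p z) (seq 0 L).

Lemma coef_taylor p z L j : coef (taylor p z L) j = if Nat.ltb j L then Tc j p z else C0.
Proof.
  unfold taylor, coef. destruct (Nat.ltb_spec j L).
  - rewrite nth_indep with (d' := Tc 0 p z) by (rewrite length_map, length_seq; auto).
    change (Tc 0 p z) with ((fun i => Tc i p z) 0%nat).
    rewrite map_nth, seq_nth; auto.
  - apply nth_overflow. rewrite length_map, length_seq; auto.
Qed.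

Lemma taylor_thm p z h L : (length p <= L)%nat -> peval p (Cadd z h) = peval (taylor p z L) h.
Proof.
  revert L; induction p as [|a t IH]; intros L HL.
  - rewrite (peval_ext (taylor [] z L) [] h); [reflexivity|].
    intro j. rewrite coef_taylor, coef_nil. destruct (Nat.ltb j L); auto.
    apply Tc_short. simpl; lia.
  - destruct L as [|L]; [simpl in HL; lia|]. simpl in HL.
    rewrite (peval_ext (taylor (a :: t) z (S L)) (padd (padd [a] (scal z (taylor t z L))) (C0 :: taylor t z L))).
    + rewrite !peval_padd, peval_scal, !peval_cons, <- (IH L) by lia.
      rewrite peval_nil. cx.
    + intro j. rewrite !coef_padd, coef_scal, coef_taylor.
      destruct j as [|j].
      * simpl Nat.ltb. rewrite coef_taylor. destruct (Nat.ltb 0 L) eqn:E0.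
        -- unfold Tc. simpl pderivn. rewrite !coef_cons0. simpl. rewrite Rinv_1. cx.
        -- assert (t = []) by (apply length_zero_iff_nil; apply Nat.ltb_ge in E0; lia). subst t.
           unfold Tc. simpl pderivn. rewrite !coef_cons0. simpl. rewrite Rinv_1. cx.
      * rewrite coef_consS, coef_consS, coef_taylor, coef_taylor, coef_nil.
        destruct (Nat.ltb_spec (S j) (S L)).
        -- rewrite Tc_cons. destruct (Nat.ltb_spec j L); [|lia].
           destruct (Nat.ltb_spec (S j) L).
           ++ cx.
           ++ rewrite (Tc_short (S j) t) by lia. cx.
        -- destruct (Nat.ltb_spec j L); [lia|].
           destruct (Nat.ltb_spec (S j) L); [lia|]. cx.
Qed.

Definition linprod (l : list Cx) : cpoly :=
  fold_right (fun a acc => pmul [a; RtoC 1] acc) [RtoC 1] l.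

Lemma peval_linprod l h :
  peval (linprod l) h = fold_right (fun a acc => Cmul (Cadd a h) acc) (RtoC 1) l.
Proof.
  induction l as [|a l IH].
  - simpl. cx.
  - change (linprod (a :: l)) with (pmul [a; RtoC 1] (linprod l)). rewrite peval_pmul, IH. simpl fold_right. simpl peval. cx.
Qed.

Lemma length_padd p q : length (padd p q) = Nat.max (length p) (length q).
Proof.
  revert q; induction p as [|a p IH]; intros q; [reflexivity|].
  destruct q; simpl; [reflexivity|]. rewrite IH. reflexivity.
Qed.
Lemma length_scal c p : length (scal c p) = length p.
Proof. unfold scal. apply length_map. Qed.

Lemma length_linprod l : length (linprod l) = S (length l).
Proof.
  induction l as [|a l IH]; [reflexivity|].
  change (linprod (a :: l)) with (pmul [a; RtoC 1] (linprod l)). simpl pmul. rewrite !length_padd, !length_scal. simpl length.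
  rewrite length_padd, length_scal. simpl. rewrite IH. lia.
Qed.

Lemma coef_lin_S a acc j :
  coef (pmul [a; RtoC 1] acc) (S j) = Cadd (Cmul a (coef acc (S j))) (coef acc j).
Proof.
  simpl pmul. rewrite coef_padd, coef_scal, coef_consS, coef_padd, coef_scal.
  replace (coef [C0] j) with C0 by (destruct j as [|[|j]]; reflexivity). cx.
Qed.
Lemma coef_lin_0 a acc :
  coef (pmul [a; RtoC 1] acc) 0 = Cmul a (coef acc 0).
Proof. simpl pmul. rewrite coef_padd, coef_scal, coef_cons0. cx. Qed.

Lemma linprod_monic l : coef (linprod l) (length l) = RtoC 1.
Proof.
  induction l as [|a l IH]; [reflexivity|].
  simpl length. change (linprod (a :: l)) with (pmul [a; RtoC 1] (linprod l)). rewrite coef_lin_S, IH.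
  rewrite coef_overflow by (rewrite length_linprod; lia). cx.
Qed.

Lemma fold_app_mul l1 l2 h :
  fold_right (fun a acc => Cmul (Cadd a h) acc) (RtoC 1) (l1 ++ l2) =
  Cmul (fold_right (fun a acc => Cmul (Cadd a h) acc) (RtoC 1) l1)
       (fold_right (fun a acc => Cmul (Cadd a h) acc) (RtoC 1) l2).
Proof.
  induction l1 as [|a l1 IH]; simpl.
  - cx.
  - rewrite IH. cx.
Qed.

Lemma linprod_app l1 l2 j : coef (linprod (l1 ++ l2)) j = coef (pmul (linprod l2) (linprod l1)) j.
Proof.
  apply uniq_coef. intro x. rewrite peval_pmul, !peval_linprod, fold_app_mul. cx.
Qed.

Definition pabs (l : list Cx) (t : R) : R := fold_right (fun a acc => (Cmod a + t) * acc) 1 l.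

Lemma pabs_ge0 l t : 0 <= t -> 0 <= pabs l t.
Proof. intro. induction l; simpl; [lra|]. pose proof (Cmod_ge0 a). nra. Qed.

Lemma aeval_linprod l t : 0 <= t -> aeval (linprod l) t <= pabs l t.
Proof.
  intro Ht. induction l as [|a l IH].
  - change (linprod []) with [RtoC 1]. rewrite aeval_cons, Cmod_RtoC, Rabs_R1. change (aeval [] t) with 0. simpl. lra.
  - change (linprod (a :: l)) with (pmul [a; RtoC 1] (linprod l)). eapply Rle_trans; [apply aeval_pmul; auto|].
    simpl pabs. rewrite !aeval_cons, Cmod_RtoC, Rabs_R1. change (aeval [] t) with 0.
    pose proof (aeval_ge0 (linprod l) t Ht). pose proof (Cmod_ge0 a).
    apply Rmult_le_compat; nra.
Qed.

Lemma pabs_small l r0 t : 0 <= t -> (forall x, In x l -> Cmod x <= r0) ->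
  pabs l t <= (r0 + t) ^ (length l).
Proof.
  intros Ht H. induction l as [|a l IH]; simpl; [lra|].
  assert (Ha := H a (or_introl eq_refl)).
  assert (IH' : pabs l t <= (r0 + t) ^ length l) by (apply IH; intros; apply H; right; auto).
  pose proof (pabs_ge0 l t Ht). pose proof (Cmod_ge0 a).
  apply Rmult_le_compat; nra.
Qed.

Lemma pabs_big l R0 t : 0 < R0 -> 0 <= t -> (forall x, In x l -> R0 <= Cmod x) ->
  pabs l t <= pabs l 0 * (1 + t / R0) ^ (length l).
Proof.
  intros HR Ht H. induction l as [|a l IH]; simpl; [lra|].
  assert (Ha := H a (or_introl eq_refl)).
  assert (IH' : pabs l t <= pabs l 0 * (1 + t / R0) ^ length l) by (apply IH; intros; apply H; right; auto).
  pose proof (pabs_ge0 l t Ht).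
  assert (E : Cmod a + t <= (Cmod a + 0) * (1 + t / R0)).
  { assert (t <= Cmod a * (t / R0)).
    { unfold Rdiv. replace t with (R0 * (t * / R0)) at 1 by (field; lra).
      apply Rmult_le_compat_r; [|lra]. apply Rmult_le_pos; [lra|]. apply Rlt_le, Rinv_0_lt_compat; lra. }
    lra. }
  replace ((Cmod a + 0) * pabs l 0 * ((1 + t / R0) * (1 + t / R0) ^ length l))
    with (((Cmod a + 0) * (1 + t / R0)) * (pabs l 0 * (1 + t / R0) ^ length l)) by ring.
  apply Rmult_le_compat; auto. pose proof (Cmod_ge0 a). lra.
Qed.

Lemma pabs_pos l R0 : 0 < R0 -> (forall x, In x l -> R0 <= Cmod x) -> 0 < pabs l 0.
Proof.
  intros HR H. induction l as [|a l IH]; simpl; [lra|].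
  assert (Ha := H a (or_introl eq_refl)).
  assert (0 < pabs l 0) by (apply IH; intros; apply H; right; auto). nra.
Qed.

Lemma coef0_peval p : coef p 0 = peval p C0.
Proof. destruct p; simpl; [reflexivity|]. cx. Qed.

Lemma Cmod_B l : Cmod (coef (linprod l) 0) = pabs l 0.
Proof.
  rewrite coef0_peval, peval_linprod. induction l as [|a l IH]; cbn [fold_right pabs].
  - rewrite Cmod_RtoC, Rabs_R1. reflexivity.
  - rewrite Cmod_mul, IH. replace (Cadd a C0) with a by cx. unfold pabs; fold pabs. cbn [fold_right]. ring.
Qed.

Definition rsum (l : list nat) (f : nat -> R) : R := fold_right Rplus 0 (map f l).

Lemma rsum_scale l f c : rsum l (fun i => c * f i) = c * rsum l f.
Proof. induction l; unfold rsum in *; simpl; [ring|]. rewrite IHl. ring. Qed.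
Lemma rsum_le l f g : (forall i, In i l -> f i <= g i) -> rsum l f <= rsum l g.
Proof.
  induction l; intros H; unfold rsum; simpl; [lra|].
  apply Rplus_le_compat; [apply H; left; auto|]. apply IHl. intros; apply H; right; auto.
Qed.
Lemma rsum_ext l f g : (forall i, In i l -> f i = g i) -> rsum l f = rsum l g.
Proof.
  induction l; intros H; unfold rsum; simpl; [lra|].
  rewrite H by (left; auto). f_equal. apply IHl. intros; apply H; right; auto.
Qed.
Lemma rsum_shift s c f : rsum (seq (S s) c) f = rsum (seq s c) (fun i => f (S i)).
Proof. unfold rsum. rewrite <- seq_shift, map_map. reflexivity. Qed.

Lemma rsum_aeval p t s c : 0 <= t ->
  rsum (seq s c) (fun i => Cmod (coef p i) * t ^ i) <= aeval p t.
Proof.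
  intro Ht. revert s c; induction p as [|a p IH]; intros s c.
  - simpl. transitivity (rsum (seq s c) (fun _ => 0)).
    + apply Req_le, rsum_ext. intros. rewrite coef_nil, Cmod_C0. ring.
    + clear. revert s. induction c; intros s; unfold rsum; simpl; [lra|]. unfold rsum in IHc. specialize (IHc (S s)). lra.
  - rewrite aeval_cons. pose proof (Cmod_ge0 a).
    assert (G : forall s' c', rsum (seq (S s') c') (fun i => Cmod (coef (a :: p) i) * t ^ i)
                   <= t * aeval p t).
    { intros s' c'. rewrite rsum_shift.
      rewrite (rsum_ext _ _ (fun i => t * (Cmod (coef p i) * t ^ i))).
      - rewrite rsum_scale. apply Rmult_le_compat_l; auto.
      - intros. rewrite coef_consS. simpl. ring. }
    destruct s as [|s].
    + destruct c as [|c]; [unfold rsum; simpl; pose proof (aeval_ge0 p t Ht); nra|].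
      simpl seq. unfold rsum at 1. simpl map. simpl fold_right.
      fold (rsum (seq 1 c) (fun i => Cmod (coef (a :: p) i) * t ^ i)).
      specialize (G O c). rewrite coef_cons0. simpl pow. lra.
    + specialize (G s c). pose proof (aeval_ge0 p t Ht). nra.
Qed.

Lemma coef_aeval p t j : 0 <= t -> Cmod (coef p j) * t ^ j <= aeval p t.
Proof.
  intro Ht. assert (H := rsum_aeval p t j 1 Ht). unfold rsum in H. simpl in H. lra.
Qed.

Lemma coef_firstn q d j : (j < d)%nat -> coef (firstn d q) j = coef q j.
Proof.
  revert d j; induction q as [|a q IH]; intros d j H.
  - rewrite firstn_nil. reflexivity.
  - destruct d; [lia|]. simpl firstn. destruct j; [reflexivity|].
    rewrite !coef_consS. apply IH. lia.
Qed.
Lemma coef_pmul_prefix p q d j : (j < d)%nat -> coef (pmul p q) j = coef (pmul p (firstn d q)) j.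
Proof.
  revert j; induction p as [|a p IH]; intros j H; [reflexivity|].
  simpl pmul. rewrite !coef_padd, !coef_scal, coef_firstn by auto.
  destruct j; [reflexivity|]. rewrite !coef_consS. rewrite IH by lia. reflexivity.
Qed.
Lemma aeval_split Q k t : length Q = S k ->
  aeval Q t = aeval (firstn k Q) t + Cmod (coef Q k) * t ^ k.
Proof.
  revert Q; induction k; intros Q HQ.
  - destruct Q as [|a [|b Q]]; simpl in HQ; try lia. simpl firstn. rewrite aeval_cons, coef_cons0. change (aeval [] t) with 0. simpl pow. ring.
  - destruct Q as [|a Q]; simpl in HQ; [lia|]. simpl firstn. rewrite !aeval_cons.
    rewrite (IHk Q) by lia. rewrite coef_consS. simpl. ring.
Qed.

Lemma K_common (u w : list Cx) r0 R0 t :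
  0 < R0 -> 0 <= r0 -> 0 < t ->
  (forall x, In x u -> Cmod x <= r0) -> (forall x, In x w -> R0 <= Cmod x) ->
  exists B' P', linprod w = B' :: P' /\ Cmod B' = pabs w 0 /\
     t * aeval P' t <= pabs w 0 * ((1 + t / R0) ^ length w - 1).
Proof.
  intros HR Hr Ht Hu Hw.
  destruct (linprod w) as [|B' P'] eqn:E.
  { exfalso. assert (H := length_linprod w). rewrite E in H. simpl in H. lia. }
  exists B', P'. split; [reflexivity|].
  assert (HB : Cmod B' = pabs w 0).
  { rewrite <- Cmod_B, E. reflexivity. }
  split; auto.
  assert (H1 := aeval_linprod w t (Rlt_le _ _ Ht)). rewrite E, aeval_cons in H1.
  assert (H2 := pabs_big w R0 t HR (Rlt_le _ _ Ht) Hw). nra.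
Qed.

Lemma K1 (u w : list Cx) r0 R0 t :
  0 < R0 -> 0 <= r0 -> 0 < t ->
  (forall x, In x u -> Cmod x <= r0) -> (forall x, In x w -> R0 <= Cmod x) ->
  Cmod (Csub (coef (pmul (linprod w) (linprod u)) (length u)) (coef (linprod w) 0))
  <= pabs w 0 * ((1 + r0 / t) ^ length u - 1) * ((1 + t / R0) ^ length w - 1).
Proof.
  intros HR Hr Ht Hu Hw.
  destruct (K_common u w r0 R0 t HR Hr Ht Hu Hw) as (B' & P' & E & HB & HP).
  rewrite E. rewrite coef_cons0.
  change (pmul (B' :: P') (linprod u)) with (padd (scal B' (linprod u)) (C0 :: pmul P' (linprod u))).
  rewrite coef_padd, coef_scal, linprod_monic.
  set (E1 := (1 + t / R0) ^ length w - 1) in *.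
  assert (HE1 : 0 <= E1).
  { unfold E1. assert (1 <= (1 + t / R0) ^ length w); [|lra].
    apply pow_R1_Rle. assert (0 <= t / R0) by (apply Rmult_le_pos; [lra|apply Rlt_le, Rinv_0_lt_compat; lra]). lra. }
  assert (HP0 : 0 <= pabs w 0) by (apply pabs_ge0; lra).
  destruct (length u) as [|k] eqn:Hk.
  - rewrite coef_cons0. replace (Csub (Cadd (Cmul B' (RtoC 1)) C0) B') with C0 by cx.
    rewrite Cmod_C0. simpl. lra.
  - rewrite coef_consS. rewrite (coef_pmul_prefix P' (linprod u) (S k) k) by lia.
    set (X := coef (pmul P' (firstn (S k) (linprod u))) k).
    replace (Csub (Cadd (Cmul B' (RtoC 1)) X) B') with X by cx.
    assert (A1 := coef_aeval (pmul P' (firstn (S k) (linprod u))) t k (Rlt_le _ _ Ht)).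
    fold X in A1.
    assert (A2 := aeval_pmul P' (firstn (S k) (linprod u)) t (Rlt_le _ _ Ht)).
    assert (A3 := aeval_split (linprod u) (S k) t ltac:(rewrite length_linprod; lia)).
    rewrite <- Hk, linprod_monic, Cmod_RtoC, Rabs_R1, Hk in A3.
    assert (A4 := aeval_linprod u t (Rlt_le _ _ Ht)).
    assert (A5 := pabs_small u r0 t (Rlt_le _ _ Ht) Hu). rewrite Hk in A5.
    set (Bq := aeval (firstn (S k) (linprod u)) t) in *.
    set (A := aeval P' t) in *.
    assert (HA : 0 <= A) by (apply aeval_ge0; lra).
    assert (HBq : 0 <= Bq) by (apply aeval_ge0; lra).
    assert (Htk : 0 < t ^ k) by (apply pow_lt; lra).
    assert (G : (r0 + t) ^ S k = t ^ S k * (1 + r0 / t) ^ S k).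
    { rewrite <- Rpow_mult_distr. f_equal. field. lra. }
    set (G1 := (1 + r0 / t) ^ S k) in *.
    assert (Bq <= t * t ^ k * (G1 - 1)).
    { replace (t * t ^ k * (G1 - 1)) with (t ^ S k * G1 - 1 * t ^ S k) by (simpl; ring).
      rewrite G in A5. pose proof (Rle_trans _ _ _ A4 A5) as A6. rewrite A3 in A6. set (T := t ^ S k * G1) in *. set (T2 := t ^ S k) in *. clearbody T T2. lra. }
    assert (Cmod X * t ^ k * t <= pabs w 0 * E1 * (t * t ^ k * (G1 - 1))).
    { apply Rle_trans with (A * Bq * t).
      { apply Rmult_le_compat_r; [lra|]. eapply Rle_trans; [exact A1|exact A2]. }
      apply Rle_trans with (pabs w 0 * E1 * Bq).
      { replace (A * Bq * t) with ((t * A) * Bq) by ring. apply Rmult_le_compat_r; auto. }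
      apply Rmult_le_compat_l; [apply Rmult_le_pos; auto|auto]. }
    assert (HG1 : 0 <= G1 - 1).
    { unfold G1. assert (1 <= (1 + r0 / t) ^ S k); [|lra].
      apply pow_R1_Rle. assert (0 <= r0 / t) by (apply Rmult_le_pos; [lra|apply Rlt_le, Rinv_0_lt_compat; lra]). lra. }
    apply Rmult_le_reg_r with (t ^ k * t); [nra|].
    replace (Cmod X * (t ^ k * t)) with (Cmod X * t ^ k * t) by ring.
    replace (pabs w 0 * (G1 - 1) * E1 * (t ^ k * t)) with (pabs w 0 * E1 * (t * t ^ k * (G1 - 1))) by ring.
    auto.
Qed.

Lemma K2 (u w : list Cx) r0 R0 rho M :
  0 < R0 -> 0 <= r0 -> 0 < rho ->
  (forall x, In x u -> Cmod x <= r0) -> (forall x, In x w -> R0 <= Cmod x) ->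
  rsum (seq (S (length u)) M) (fun i => Cmod (coef (pmul (linprod w) (linprod u)) i) * rho ^ i)
  <= pabs w 0 * ((1 + rho / R0) ^ length w - 1) * (r0 + rho) ^ length u.
Proof.
  intros HR Hr Ht Hu Hw.
  destruct (K_common u w r0 R0 rho HR Hr Ht Hu Hw) as (B' & P' & E & HB & HP).
  rewrite E.
  change (pmul (B' :: P') (linprod u)) with (padd (scal B' (linprod u)) (C0 :: pmul P' (linprod u))).
  rewrite (rsum_ext _ _ (fun i => Cmod (coef (C0 :: pmul P' (linprod u)) i) * rho ^ i)).
  - eapply Rle_trans; [apply rsum_aeval; lra|].
    rewrite aeval_cons, Cmod_C0.
    assert (A2 := aeval_pmul P' (linprod u) rho (Rlt_le _ _ Ht)).
    assert (A4 := aeval_linprod u rho (Rlt_le _ _ Ht)).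
    assert (A5 := pabs_small u r0 rho (Rlt_le _ _ Ht) Hu).
    assert (HA : 0 <= aeval P' rho) by (apply aeval_ge0; lra).
    assert (0 <= aeval (linprod u) rho) by (apply aeval_ge0; lra).
    apply Rle_trans with (rho * aeval P' rho * aeval (linprod u) rho); [nra|].
    apply Rmult_le_compat; try nra.
  - intros i Hi. apply in_seq in Hi. rewrite coef_padd, coef_scal.
    rewrite (coef_overflow (linprod u)) by (rewrite length_linprod; lia).
    f_equal. f_equal. cx.
Qed.

Lemma fold_map_sub zs z h :
  fold_right (fun w acc => Cmul (Csub (Cadd z h) w) acc) (RtoC 1) zs =
  fold_right (fun a acc => Cmul (Cadd a h) acc) (RtoC 1) (map (fun w => Csub z w) zs).
Proof.
  induction zs as [|w zs IH]; [reflexivity|]. simpl. rewrite IH.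
  replace (Csub (Cadd z h) w) with (Cadd (Csub z w) h) by cx. reflexivity.
Qed.

Lemma link F n zs z i : length F = S n -> roots_with_mult F zs -> (i <= n)%nat ->
  peval (pderivn i F) z =
  Cmul (RtoC (INR (fact i))) (Cmul (nth n F C0) (coef (linprod (map (fun w => Csub z w) zs)) i)).
Proof.
  intros HL HR Hi.
  assert (U := uniq_coef (taylor F z (S n)) (scal (nth n F C0) (linprod (map (fun w => Csub z w) zs)))).
  assert (Ui : coef (taylor F z (S n)) i = coef (scal (nth n F C0) (linprod (map (fun w => Csub z w) zs))) i).
  { apply U. intro h. rewrite <- taylor_thm by lia. rewrite HR, HL. simpl pred.
    rewrite peval_scal, peval_linprod, fold_map_sub. reflexivity. }
  rewrite coef_taylor, coef_scal in Ui.
  destruct (Nat.ltb_spec i (S n)); [|lia].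
  rewrite <- Ui. unfold Tc.
  assert (INR (fact i) <> 0) by (apply not_0_INR, fact_neq_0).
  set (D := peval (pderivn i F) z). destruct D as [d1 d2].
  unfold Cmul, RtoC. simpl. apply Cx_ext; simpl; field; auto.
Qed.

Lemma quad_bound (k : nat) a : 0 <= a -> INR k * a <= 1 ->
  (1 + a) ^ k <= 1 + INR k * a + (INR k * a) ^ 2.
Proof.
  intros Ha. induction k; intro Hk.
  - simpl. lra.
  - rewrite S_INR in *. assert (Hk' : INR k * a <= 1) by (pose proof (pos_INR k); nra).
    specialize (IHk Hk'). simpl pow in *.
    pose proof (pos_INR k).
    assert (H1 : 0 <= 1 + a) by lra.
    apply Rle_trans with ((1 + a) * (1 + INR k * a + INR k * a * (INR k * a * 1))).
    { apply Rmult_le_compat_l; auto. }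
    assert (INR k * INR k * a <= INR k + 1).
    { assert (INR k * (INR k * a) <= INR k * 1) by (apply Rmult_le_compat_l; lra). nra. }
    assert (a * a * (INR k * INR k * a) <= a * a * (INR k + 1)) by (apply Rmult_le_compat_l; nra).
    nra.
Qed.

Lemma ln_bounds x : 0 < x -> 0 < ln (1 + x) /\ ln (1 + x) <= x.
Proof.
  intro Hx. split.
  - rewrite <- ln_1. apply ln_increasing; lra.
  - destruct (Rle_lt_dec (ln (1 + x)) x) as [H|H]; auto.
    apply exp_increasing in H. rewrite exp_ln in H by lra.
    pose proof (exp_ineq1_le x). lra.
Qed.

Lemma N1 c2 nn kp NN r : 16 <= c2 * nn -> 2 <= nn -> 1 <= kp -> 0 <= NN <= nn -> 0 < r ->
  0 < 4 * c2 * kp * nn ^ 3 * r - c2 * nn ^ 2 * r /\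
  NN * (2 * kp * (c2 * nn ^ 2 * r + r) / (4 * c2 * kp * nn ^ 3 * r - c2 * nn ^ 2 * r)) <= 3 / 5.
Proof.
  intros HA Hn Hk HN Hr.
  set (A := c2 * nn) in *.
  assert (E1 : 4 * c2 * kp * nn ^ 3 * r - c2 * nn ^ 2 * r = r * (A * nn) * (4 * kp * nn - 1)) by (unfold A; ring).
  assert (E2 : c2 * nn ^ 2 * r + r = r * (A * nn + 1)) by (unfold A; ring).
  rewrite E1, E2. clearbody A.
  assert (P1 : 0 < A * nn) by nra.
  assert (P2 : 0 < 4 * kp * nn - 1) by nra.
  assert (P3 : 0 < r * (A * nn) * (4 * kp * nn - 1)) by (apply Rmult_lt_0_compat; [apply Rmult_lt_0_compat|]; lra).
  split; auto.
  unfold Rdiv. rewrite <- Rmult_assoc.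
  apply Rmult_le_reg_r with (r * (A * nn) * (4 * kp * nn - 1)); auto.
  rewrite Rmult_assoc, Rinv_l by lra. rewrite Rmult_1_r.
  assert (H1 : NN * (2 * kp * (r * (A * nn + 1))) <= nn * (2 * kp * (r * (A * nn + 1)))).
  { apply Rmult_le_compat_r; [|lra]. apply Rmult_le_pos; [lra|]. apply Rmult_le_pos; nra. }
  assert (H2 : 2 * A * kp * nn >= 10 * kp + 3 * A).
  { assert (A * kp * nn >= 2 * A * kp).
    { assert (0 <= A * kp) by nra. nra. }
    assert (A * kp >= A) by nra. assert (A * kp >= 16 * kp) by nra. lra. }
  assert (H3 : nn * (2 * kp * (r * (A * nn + 1))) <= 3 / 5 * (r * (A * nn) * (4 * kp * nn - 1))).
  { assert (0 < r * nn) by nra.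
    replace (nn * (2 * kp * (r * (A * nn + 1)))) with ((r * nn) * (2 * A * kp * nn + 2 * kp)) by ring.
    replace (3 / 5 * (r * (A * nn) * (4 * kp * nn - 1))) with ((r * nn) * (3/5 * (4 * A * kp * nn - A))) by ring.
    apply Rmult_le_compat_l; lra. }
  lra.
Qed.

Lemma N2 c2 nn kp NN r : 16 <= c2 * nn -> 2 <= nn -> 1 <= kp -> 0 <= NN <= nn -> 0 < r ->
  0 < 4 * c2 * kp * nn ^ 3 * r /\ NN * (2 * kp * r / (4 * c2 * kp * nn ^ 3 * r)) <= 1 / 64.
Proof.
  intros HA Hn Hk HN Hr.
  assert (Hc : 0 < c2) by nra.
  assert (P : 0 < 4 * c2 * kp * nn ^ 3 * r).
  { repeat apply Rmult_lt_0_compat; try lra; apply pow_lt; lra. }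
  split; auto.
  replace (2 * kp * r / (4 * c2 * kp * nn ^ 3 * r)) with (/ (2 * (c2 * nn) * nn ^ 2)) by (field; repeat split; try (apply pow_nonzero); lra).
  assert (0 < 2 * (c2 * nn) * nn ^ 2) by (simpl; nra).
  apply Rmult_le_reg_r with (2 * (c2 * nn) * nn ^ 2); auto.
  rewrite Rmult_assoc, Rinv_l by lra. rewrite Rmult_1_r.
  assert (nn <= 1/64 * (2 * (c2 * nn) * nn ^ 2)).
  { simpl. assert (c2 * nn * nn >= 32) by nra. nra. }
  lra.
Qed.

Lemma N3 c1 c2 nn kp NN r K L2 : 16 <= c2 * nn -> 2 <= nn -> 1 <= kp -> 0 <= NN <= nn -> 0 < r ->
  1 <= K -> 0 < L2 -> 2 * K * L2 <= 1 -> c1 * nn <= c2 * nn * L2 -> 0 < c1 ->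
  NN * (c1 * nn * r / (4 * c2 * kp * nn ^ 3 * r)) <= 1 / (16 * K).
Proof.
  intros HA Hn Hk HN Hr HK HL HL2 Hc Hc1.
  assert (Hc2 : 0 < c2) by nra.
  assert (P : 0 < 4 * c2 * kp * nn ^ 3 * r).
  { repeat apply Rmult_lt_0_compat; try lra; apply pow_lt; lra. }
  replace (c1 * nn * r / (4 * c2 * kp * nn ^ 3 * r)) with (c1 * nn / (4 * c2 * kp * nn ^ 3)) by (field; repeat split; try (apply pow_nonzero); lra).
  assert (P' : 0 < 4 * c2 * kp * nn ^ 3) by nra.
  unfold Rdiv. rewrite <- Rmult_assoc.
  apply Rmult_le_reg_r with (4 * c2 * kp * nn ^ 3 * (16 * K)); [nra|].
  replace (NN * (c1 * nn) * / (4 * c2 * kp * nn ^ 3) * (4 * c2 * kp * nn ^ 3 * (16 * K)))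
    with (16 * K * NN * (c1 * nn)) by (field; lra).
  replace (1 * / (16 * K) * (4 * c2 * kp * nn ^ 3 * (16 * K))) with (4 * c2 * kp * nn ^ 3) by (field; lra).
  assert (S1 : 16 * K * NN * (c1 * nn) <= 16 * K * nn * (c2 * nn * L2)).
  { apply Rmult_le_compat; try nra. }
  assert (S2 : 16 * K * nn * (c2 * nn * L2) = 8 * (c2 * nn) * nn * (2 * K * L2)) by ring.
  assert (S3 : 8 * (c2 * nn) * nn * (2 * K * L2) <= 8 * (c2 * nn) * nn) by (assert (X0 : 0 <= 8 * (c2 * nn) * nn) by nra; pose proof (Rmult_le_compat_l _ _ _ X0 HL2); lra).
  assert (S4 : 8 * (c2 * nn) * nn <= 4 * c2 * kp * nn ^ 3).
  { simpl. assert (kp * nn >= 2) by nra. nra. }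
  lra.
Qed.

Theorem lemmaA1 (F : cpoly) (n : nat) (zs : list Cx) (k : nat) (K c1 c2 : R)
  (m : Cx) (r : R)
  (Hn : (2 <= n)%nat)
  (HF : has_degree F n)
  (Hzs_len : length zs = n)
  (Hroots : roots_with_mult F zs)
  (Hk : (k <= n)%nat)
  (HK : 1 <= K)
  (Hc2 : c2 * INR n * ln ((1 + 2 * K) / (2 * K)) >= c1 * INR n)
  (Hc1 : c1 * INR n >= INR (Nat.max 1 k) / ln (1 + 1 / (8 * K)))
  (Hr : 0 < r)
  (Hiso : isolating zs (fun i => (i < k)%nat) m r 1
            (4 * c2 * INR (Nat.max 1 k) * INR n ^ 3)) :
  (forall z : Cx, Cmod (Csub z m) < c2 * INR n ^ 2 * r ->
      peval (pderivn k F) z <> C0) /\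
  sum_range (S k) n (fun i =>
      Cmod (Cdiv (Cmul (Cmul (peval (pderivn i F) m)
                              (RtoC ((c1 * INR n * r) ^ (i - k))))
                        (RtoC (INR (fact k))))
                  (Cmul (peval (pderivn k F) m) (RtoC (INR (fact i))))))
  < 1 / (2 * K).
Proof.
  destruct HF as [HL Hlead].
  destruct Hiso as [Hin Hout].
  assert (Hnn : 2 <= INR n) by (replace 2 with (INR 2) by (simpl; ring); apply le_INR; auto).
  assert (Hkp : 1 <= INR (Nat.max 1 k)) by (replace 1 with (INR 1) by reflexivity; apply le_INR; lia).
  assert (Hkk : INR k <= INR (Nat.max 1 k)) by (apply le_INR; lia).
  assert (HNN : 0 <= INR (n - k) <= INR n) by (split; [apply pos_INR|apply le_INR; lia]).
  assert (Hk0 : 0 <= INR k) by apply pos_INR.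
  set (nn := INR n) in *. set (kp := INR (Nat.max 1 k)) in *.
  assert (HK0 : 0 < K) by lra.
  destruct (ln_bounds (1 / (8 * K))) as [L1p L1le]; [apply Rdiv_lt_0_compat; lra|].
  replace ((1 + 2 * K) / (2 * K)) with (1 + 1 / (2 * K)) in Hc2 by (field; lra).
  destruct (ln_bounds (1 / (2 * K))) as [L2p L2le]; [apply Rdiv_lt_0_compat; lra|].
  set (L1 := ln (1 + 1 / (8 * K))) in *. set (L2 := ln (1 + 1 / (2 * K))) in *.
  clearbody L1 L2.
  assert (HL1 : 8 * K * L1 <= 1).
  { apply Rmult_le_compat_l with (r := 8 * K) in L1le; [|lra].
    replace (8 * K * (1 / (8 * K))) with 1 in L1le by (field; lra). lra. }
  assert (HL2 : 2 * K * L2 <= 1).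
  { apply Rmult_le_compat_l with (r := 2 * K) in L2le; [|lra].
    replace (2 * K * (1 / (2 * K))) with 1 in L2le by (field; lra). lra. }
  assert (Hc1' : 8 * K * kp <= c1 * nn).
  { assert (kp / L1 * L1 = kp) by (field; lra).
    assert (8 * K * kp * L1 <= kp / L1 * L1) by nra.
    assert (8 * K * kp <= kp / L1) by (apply Rmult_le_reg_r with L1; lra). lra. }
  assert (Hc1pos : 0 < c1) by nra.
  assert (Hc2n : 16 <= c2 * nn).
  { assert (c2 * nn * L2 >= 8 * K) by nra.
    assert (0 < c2 * nn) by nra.
    assert (c2 * nn * (2 * K * L2) <= c2 * nn) by nra.
    nra. }
  assert (Hsmall : forall x, In x (firstn k zs) -> Cmod (Csub x m) < r).
  { intros x Hx. apply (In_nth _ _ C0) in Hx. destruct Hx as (j & Hj & Ej).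
    rewrite length_firstn in Hj.
    assert (Ej' : coef zs j = x) by (rewrite <- Ej; symmetry; apply coef_firstn; lia).
    unfold coef in Ej'. rewrite <- Ej'.
    assert (H := proj1 (Hin j ltac:(lia)) ltac:(lia)). lra. }
  assert (Hbig : forall x, In x (skipn k zs) -> 4 * c2 * kp * nn ^ 3 * r <= Cmod (Csub x m)).
  { intros x Hx. apply (In_nth _ _ C0) in Hx. destruct Hx as (j & Hj & Ej).
    rewrite length_skipn in Hj. rewrite nth_skipn in Ej. rewrite <- Ej.
    assert (H1 : ~ (Cmod (Csub (nth (k + j) zs C0) m) < 1 * r)).
    { intro H. apply (proj2 (Hin (k + j)%nat ltac:(lia))) in H. lia. }
    assert (H2 := Hout (k + j)%nat ltac:(lia)).
    destruct (Rlt_le_dec (Cmod (Csub (nth (k + j) zs C0) m)) (4 * c2 * kp * nn ^ 3 * r)); auto.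
    exfalso. apply H2. split; lra. }
  assert (Hsplit : forall z i, coef (linprod (map (fun w => Csub z w) zs)) i =
      coef (pmul (linprod (map (fun w => Csub z w) (skipn k zs))) (linprod (map (fun w => Csub z w) (firstn k zs)))) i).
  { intros z i. rewrite <- (firstn_skipn k zs) at 1. rewrite map_app. apply linprod_app. }
  assert (Lu : forall z, length (map (fun w => Csub z w) (firstn k zs)) = k).
  { intro z. rewrite length_map, length_firstn. lia. }
  assert (Lw : forall z, length (map (fun w => Csub z w) (skipn k zs)) = (n - k)%nat).
  { intro z. rewrite length_map, length_skipn. lia. }
  assert (HL' : length F = S n) by exact HL.
  split.
  -
    intros z Hz Hzero.
    destruct (N1 c2 nn kp (INR (n - k)) r Hc2n Hnn Hkp HNN Hr) as [HR0 Hratio].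
    assert (Hc2p : 0 < c2) by nra.
    assert (Hr0p : 0 < c2 * nn ^ 2 * r + r).
    { assert (0 < nn ^ 2) by (apply pow_lt; lra).
      assert (0 < c2 * nn ^ 2 * r) by (repeat apply Rmult_lt_0_compat; lra). lra. }
    set (us := map (fun w => Csub z w) (firstn k zs)) in *.
    set (ws := map (fun w => Csub z w) (skipn k zs)) in *.
    set (r0 := c2 * nn ^ 2 * r + r) in *.
    set (R0 := 4 * c2 * kp * nn ^ 3 * r - c2 * nn ^ 2 * r) in *.
    assert (Hu : forall x, In x us -> Cmod x <= r0).
    { intros x Hx. apply in_map_iff in Hx. destruct Hx as (y & <- & Hy).
      assert (E : Csub z y = Cadd (Csub z m) (Csub m y)) by cx. rewrite E.
      eapply Rle_trans; [apply Cmod_tri|]. rewrite (Cmod_sub_sym m y).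
      specialize (Hsmall y Hy). unfold r0. lra. }
    assert (Hw : forall x, In x ws -> R0 <= Cmod x).
    { intros x Hx. apply in_map_iff in Hx. destruct Hx as (y & <- & Hy).
      specialize (Hbig y Hy).
      assert (E : Csub y m = Cadd (Csub y z) (Csub z m)) by cx.
      pose proof (Cmod_tri (Csub y z) (Csub z m)) as T. rewrite <- E in T.
      rewrite Cmod_sub_sym. unfold R0. lra. }
    clearbody r0 R0.
    assert (Ht : 0 < 2 * kp * r0) by nra.
    assert (HK1 := K1 us ws r0 R0 (2 * kp * r0) HR0 (Rlt_le _ _ Hr0p) Ht Hu Hw).
    assert (Lus : length us = k) by apply Lu. assert (Lws : length ws = (n - k)%nat) by apply Lw.
    rewrite Lus, Lws in HK1.
    replace (1 + r0 / (2 * kp * r0)) with (1 + 1 / (2 * kp)) in HK1 by (field; lra).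
    assert (Q1 := quad_bound k (1 / (2 * kp))).
    assert (Ha : INR k * (1 / (2 * kp)) <= 1 / 2).
    { apply Rmult_le_reg_r with (2 * kp); [lra|].
      replace (INR k * (1 / (2 * kp)) * (2 * kp)) with (INR k) by (field; lra). lra. }
    assert (Ha0 : 0 <= 1 / (2 * kp)) by (apply Rlt_le, Rdiv_lt_0_compat; lra).
    specialize (Q1 Ha0 ltac:(lra)).
    assert (Q2 := quad_bound (n - k) (2 * kp * r0 / R0)).
    assert (Hb0 : 0 <= 2 * kp * r0 / R0) by (apply Rlt_le, Rdiv_lt_0_compat; lra).
    specialize (Q2 Hb0 ltac:(lra)).
    assert (G1 : 1 <= (1 + 1 / (2 * kp)) ^ k) by (apply pow_R1_Rle; lra).
    assert (G2 : 1 <= (1 + 2 * kp * r0 / R0) ^ (n - k)) by (apply pow_R1_Rle; lra).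
    assert (F1 : (1 + 1 / (2 * kp)) ^ k - 1 <= 3 / 4).
    { assert (0 <= INR k * (1 / (2 * kp))) by (apply Rmult_le_pos; lra).
      assert ((INR k * (1 / (2 * kp))) ^ 2 <= 1/4) by (simpl; nra). lra. }
    assert (F2 : (1 + 2 * kp * r0 / R0) ^ (n - k) - 1 <= 24 / 25).
    { assert (0 <= INR (n - k) * (2 * kp * r0 / R0)) by (apply Rmult_le_pos; lra).
      assert ((INR (n - k) * (2 * kp * r0 / R0)) ^ 2 <= 9/25) by (simpl; nra). lra. }
    assert (HP0 : 0 < pabs ws 0) by (apply (pabs_pos ws R0); auto).
    assert (HK1' : Cmod (Csub (coef (pmul (linprod ws) (linprod us)) k) (coef (linprod ws) 0))
                   <= pabs ws 0 * (3 / 4) * (24 / 25)).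
    { eapply Rle_trans; [exact HK1|].
      apply Rmult_le_compat; [apply Rmult_le_pos; lra | lra | apply Rmult_le_compat_l; lra | lra]. }
    rewrite (link F n zs z k HL Hroots Hk) in Hzero.
    apply Cmul_eq0 in Hzero.
    2: { intro E. injection E. intros. apply (INR_fact_neq_0 k); auto. }
    apply Cmul_eq0 in Hzero; auto.
    rewrite Hsplit in Hzero. fold us ws in Hzero. rewrite Hzero in HK1'.
    replace (Csub C0 (coef (linprod ws) 0)) with (Copp (coef (linprod ws) 0)) in HK1' by cx.
    rewrite Cmod_opp, Cmod_B in HK1'. lra.
  -
    assert (Hc2p : 0 < c2) by nra.
    destruct (N2 c2 nn kp (INR (n - k)) r Hc2n Hnn Hkp HNN Hr) as [HR0 Hratio2].
    assert (Hc12 : c1 * nn <= c2 * nn * L2) by lra.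
    assert (Hratio3 := N3 c1 c2 nn kp (INR (n - k)) r K L2 Hc2n Hnn Hkp HNN Hr HK L2p HL2 Hc12 Hc1pos).
    set (us := map (fun w => Csub m w) (firstn k zs)) in *.
    set (ws := map (fun w => Csub m w) (skipn k zs)) in *.
    set (R0 := 4 * c2 * kp * nn ^ 3 * r) in *.
    assert (Hu : forall x, In x us -> Cmod x <= r).
    { intros x Hx. apply in_map_iff in Hx. destruct Hx as (y & <- & Hy).
      rewrite Cmod_sub_sym. specialize (Hsmall y Hy). lra. }
    assert (Hw : forall x, In x ws -> R0 <= Cmod x).
    { intros x Hx. apply in_map_iff in Hx. destruct Hx as (y & <- & Hy).
      rewrite Cmod_sub_sym. apply Hbig; auto. }
    clearbody R0.
    set (rho := c1 * nn * r) in *.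
    assert (Hrho : 0 < rho) by (unfold rho; assert (0 < c1 * nn) by nra; nra).
    assert (Erho : rho = c1 * nn * r) by reflexivity.
    clearbody rho.
    assert (Lus : length us = k) by apply Lu. assert (Lws : length ws = (n - k)%nat) by apply Lw.
    assert (HP0 : 0 < pabs ws 0) by (apply (pabs_pos ws R0); auto).
    set (Pm := pmul (linprod ws) (linprod us)).
    assert (Ht : 0 < 2 * kp * r) by nra.
    assert (HK1 := K1 us ws r R0 (2 * kp * r) HR0 (Rlt_le _ _ Hr) Ht Hu Hw).
    rewrite Lus, Lws in HK1. fold Pm in HK1.
    replace (1 + r / (2 * kp * r)) with (1 + 1 / (2 * kp)) in HK1 by (field; lra).
    assert (Q1 := quad_bound k (1 / (2 * kp))).
    assert (Ha : INR k * (1 / (2 * kp)) <= 1 / 2).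
    { apply Rmult_le_reg_r with (2 * kp); [lra|].
      replace (INR k * (1 / (2 * kp)) * (2 * kp)) with (INR k) by (field; lra). lra. }
    assert (Ha0 : 0 <= 1 / (2 * kp)) by (apply Rlt_le, Rdiv_lt_0_compat; lra).
    specialize (Q1 Ha0 ltac:(lra)).
    assert (Q2 := quad_bound (n - k) (2 * kp * r / R0)).
    assert (Hb0 : 0 <= 2 * kp * r / R0) by (apply Rlt_le, Rdiv_lt_0_compat; lra).
    specialize (Q2 Hb0 ltac:(lra)).
    assert (G1 : 1 <= (1 + 1 / (2 * kp)) ^ k) by (apply pow_R1_Rle; lra).
    assert (G2 : 1 <= (1 + 2 * kp * r / R0) ^ (n - k)) by (apply pow_R1_Rle; lra).
    assert (F1 : (1 + 1 / (2 * kp)) ^ k - 1 <= 3 / 4).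
    { assert (0 <= INR k * (1 / (2 * kp))) by (apply Rmult_le_pos; lra).
      assert ((INR k * (1 / (2 * kp))) ^ 2 <= 1/4) by (simpl; nra). lra. }
    assert (F2 : (1 + 2 * kp * r / R0) ^ (n - k) - 1 <= 1 / 32).
    { assert (0 <= INR (n - k) * (2 * kp * r / R0)) by (apply Rmult_le_pos; lra).
      assert ((INR (n - k) * (2 * kp * r / R0)) ^ 2 <= 1/64 * (1/64)) by (simpl; nra). lra. }
    assert (HK1' : Cmod (Csub (coef Pm k) (coef (linprod ws) 0)) <= pabs ws 0 * (3 / 4) * (1 / 32)).
    { eapply Rle_trans; [exact HK1|].
      apply Rmult_le_compat; [apply Rmult_le_pos; lra | lra | apply Rmult_le_compat_l; lra | lra]. }
    assert (HPk : 39 / 40 * pabs ws 0 <= Cmod (coef Pm k)).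
    { pose proof (Cmod_sub_tri (coef (linprod ws) 0) (coef Pm k)) as T.
      rewrite Cmod_B, Cmod_sub_sym in T. lra. }
    assert (HK2 := K2 us ws r R0 rho (S n - S k) HR0 (Rlt_le _ _ Hr) Hrho Hu Hw).
    rewrite Lus, Lws in HK2. fold Pm in HK2.
    set (E2 := (1 + rho / R0) ^ (n - k) - 1) in *.
    assert (HE2 : 0 <= E2 /\ K * E2 <= 17 / 256).
    { assert (Q3 := quad_bound (n - k) (rho / R0)).
      assert (Hc0 : 0 <= rho / R0) by (apply Rlt_le, Rdiv_lt_0_compat; lra).
      assert (Hy : INR (n - k) * (rho / R0) <= 1 / (16 * K)) by exact Hratio3.
      assert (Hy' : 1 / (16 * K) <= 1 / 16).
      { apply Rmult_le_reg_r with (16 * K); [lra|].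
        replace (1 / (16 * K) * (16 * K)) with 1 by (field; lra). lra. }
      specialize (Q3 Hc0 ltac:(lra)).
      assert (G3 : 1 <= (1 + rho / R0) ^ (n - k)) by (apply pow_R1_Rle; lra).
      split; [unfold E2; lra|].
      set (y := INR (n - k) * (rho / R0)) in *.
      assert (0 <= y) by (apply Rmult_le_pos; lra).
      assert (Ky : K * y <= 1 / 16).
      { apply Rmult_le_compat_l with (r := K) in Hy; [|lra].
        replace (K * (1 / (16 * K))) with (1 / 16) in Hy by (field; lra). lra. }
      assert (E2 <= y * (1 + 1 / 16)) by (unfold E2; simpl in Q3; nra).
      nra. }
    assert (Hpow : (r + rho) ^ k = rho ^ k * (1 + r / rho) ^ k).
    { rewrite <- Rpow_mult_distr. f_equal. field. lra. }
    assert (HG : (1 + r / rho) ^ k <= 73 / 64).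
    { assert (Q4 := quad_bound k (r / rho)).
      assert (Hc0 : 0 <= r / rho) by (apply Rlt_le, Rdiv_lt_0_compat; lra).
      assert (Hx : INR k * (r / rho) <= 1 / 8).
      { assert (Hkp1 : kp <= c1 * nn * L1).
        { assert (kp / L1 * L1 = kp) by (field; lra).
          assert (kp / L1 * L1 <= c1 * nn * L1) by (apply Rmult_le_compat_r; lra). lra. }
        assert (L1 <= 1 / 8) by nra.
        apply Rmult_le_reg_r with rho; [lra|].
        replace (INR k * (r / rho) * rho) with (INR k * r) by (field; lra).
        rewrite Erho. assert (INR k <= c1 * nn * (1 / 8)) by nra. nra. }
      specialize (Q4 Hc0 ltac:(lra)).
      assert (0 <= INR k * (r / rho)) by (apply Rmult_le_pos; lra).
      assert ((INR k * (r / rho)) ^ 2 <= 1 / 64) by (simpl; nra). lra. }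
    assert (HPkpos : 0 < Cmod (coef Pm k)) by lra.
    assert (Hrk : 0 < rho ^ k) by (apply pow_lt; lra).
    change (sum_range (S k) n ?f) with (rsum (seq (S k) (S n - S k)) f).
    rewrite (rsum_ext _ _ (fun i => / (rho ^ k * Cmod (coef Pm k)) * (Cmod (coef Pm i) * rho ^ i))).
    + rewrite rsum_scale.
      set (S := rsum (seq (S k) (S n - S k)) (fun i => Cmod (coef Pm i) * rho ^ i)) in *.
      rewrite Hpow in HK2.
      set (Q := rho ^ k) in *. set (G := (1 + r / rho) ^ k) in *.
      set (P0 := pabs ws 0) in *. set (Pk := Cmod (coef Pm k)) in *.
      assert (HG1 : 0 <= G).
      { assert (1 <= G); [|lra]. unfold G. apply pow_R1_Rle.
        assert (0 <= r / rho) by (apply Rlt_le, Rdiv_lt_0_compat; lra). lra. }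
      clearbody S Q G P0 Pk E2.
      destruct HE2 as [HE2a HE2b].
      assert (A1 : S * K <= P0 * Q * G * (K * E2)).
      { replace (P0 * Q * G * (K * E2)) with (P0 * E2 * (Q * G) * K) by ring.
        apply Rmult_le_compat_r; lra. }
      assert (A2 : P0 * Q * G * (K * E2) <= P0 * Q * G * (17 / 256)).
      { apply Rmult_le_compat_l; [|lra]. apply Rmult_le_pos; [|lra]. apply Rmult_le_pos; lra. }
      assert (A3 : P0 * Q * G * (17 / 256) <= P0 * Q * (73 / 64) * (17 / 256)).
      { apply Rmult_le_compat_r; [lra|]. apply Rmult_le_compat_l; [apply Rmult_le_pos; lra|lra]. }
      assert (A4 : Q * (39 / 40 * P0) <= Q * Pk) by (apply Rmult_le_compat_l; lra).
      assert (A5 : 0 < P0 * Q) by (apply Rmult_lt_0_compat; lra).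
      assert (A6 : 2 * K * S < Q * Pk) by nra.
      apply Rmult_lt_reg_r with (Q * Pk * (2 * K)).
      { apply Rmult_lt_0_compat; [apply Rmult_lt_0_compat|]; lra. }
      replace (/ (Q * Pk) * S * (Q * Pk * (2 * K))) with (2 * K * S) by (field; lra).
      replace (1 / (2 * K) * (Q * Pk * (2 * K))) with (Q * Pk) by (field; lra).
      exact A6.
    + intros i Hi. apply in_seq in Hi.
      rewrite (link F n zs m i HL Hroots ltac:(lia)), (link F n zs m k HL Hroots Hk).
      rewrite !Hsplit. fold us ws Pm.
      set (lead := nth n F C0) in *.
      assert (Hl : 0 < Cmod lead) by (apply Cmod_pos; auto).
      assert (Hfi : 0 < INR (fact i)) by (apply lt_0_INR, lt_O_fact).
      assert (Hfk : 0 < INR (fact k)) by (apply lt_0_INR, lt_O_fact).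
      assert (Hden : Cmul (Cmul (RtoC (INR (fact k))) (Cmul lead (coef Pm k))) (RtoC (INR (fact i))) <> C0).
      { intro E. apply f_equal with (f := Cmod) in E.
        rewrite !Cmod_mul, !Cmod_RtoC, Cmod_C0 in E.
        rewrite (Rabs_pos_eq (INR (fact i))), (Rabs_pos_eq (INR (fact k))) in E by lra.
        assert (0 < INR (fact k) * (Cmod lead * Cmod (coef Pm k)) * INR (fact i)).
        { apply Rmult_lt_0_compat; [apply Rmult_lt_0_compat; [lra|apply Rmult_lt_0_compat; lra]|lra]. }
        lra. }
      rewrite Cmod_div by exact Hden.
      rewrite !Cmod_mul, !Cmod_RtoC.
      rewrite (Rabs_pos_eq (INR (fact i))), (Rabs_pos_eq (INR (fact k))) by lra.
      rewrite (Rabs_pos_eq (rho ^ (i - k))) by (apply pow_le; lra).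
      assert (Epow : rho ^ i = rho ^ (i - k) * rho ^ k) by (rewrite <- pow_add; f_equal; lia).
      rewrite Epow. field. repeat split; lra.
Qed.
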